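(* Let $\mathcal{P}_1=\{AABB,ABAB\}$ and $\mathcal{P}_2=\{AABB,ABBA\}$. For each $i\in\{1,2\}$ there are constants $0<c<C$ such that a.a.s. $c\,n^{1/2}\le z_{\mathcal{P}_i}(\mathbb{RM}^{(2)}_{n})\le C\,n^{1/2}$.
   Context: An ordered $2$-matching of size $n$ is a set of $n$ pairwise disjoint $2$-element subsets (edges) of the ordered set $[2n]$ covering it; $\mathbb{RM}^{(2)}_n$ is such a matching chosen uniformly at random. Matchings are written as words (each edge gets a letter, each vertex replaced by its edge's letter), and $AABB, ABAB, ABBA$ are the three $2$-patterns (ordered matchings of size 2). Two edges form a pattern if they induce a matching order-isomorphic to it. For a set $\mathcal P$ of patterns, a $\mathcal P$-clique is a matching all of whose pairs of edges form patterns in $\mathcal P$, and $z_{\mathcal P}(M)$ is the largest size of a $\mathcal P$-clique contained in $M$. ''A.a.s.'' means with probability tending to 1 as $n\to\infty$. *)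

(* Defs.v *)
From HB Require Import structures.
From mathcomp Require Import all_boot all_order all_algebra.
From mathcomp Require Import reals.
Set Implicit Arguments. Unset Strict Implicit. Unset Printing Implicit Defensive.
Import Order.TTheory GRing.Theory Num.Theory.

(* Vertex set [2n] is represented by 'I_(n.*2) (0-based, same order). *)
Definition vert (n : nat) := 'I_(n.*2).

(* An ordered 2-matching of size n, given by its fixed-point-free
   partner involution on [2n]. *)
Definition is_matching (n : nat) (M : {ffun vert n -> vert n}) : bool :=
  [forall x, (M x != x) && (M (M x) == x)].

Definition matchings (n : nat) : {set {ffun vert n -> vert n}} :=
  [set M | is_matching M].

Definition edges (n : nat) (M : {ffun vert n -> vert n}) : {set vert n * vert n} :=
  [set e | (M e.1 == e.2) && (e.1 < e.2)%N].

Inductive pattern := AABB | ABAB | ABBA.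
Definition pattern_eqb (p q : pattern) : bool :=
  match p, q with
  | AABB, AABB | ABAB, ABAB | ABBA, ABBA => true | _, _ => false end.
Lemma pattern_eqP : Equality.axiom pattern_eqb.
Proof. by case; case; constructor. Qed.
HB.instance Definition _ := hasDecEq.Build pattern pattern_eqP.

(* Pattern of (a,b),(c,d) with a < c (a<b, c<d). *)
Definition classify (a b c d : nat) : pattern :=
  if (b < c)%N then AABB else if (b < d)%N then ABAB else ABBA.

Definition pat_of (n : nat) (e f : vert n * vert n) : pattern :=
  if (e.1 < f.1)%N then classify e.1 e.2 f.1 f.2
  else classify f.1 f.2 e.1 e.2.

Definition is_clique (n : nat) (P : seq pattern) (M : {ffun vert n -> vert n})
  (S : {set vert n * vert n}) : bool :=
  (S \subset edges M) &&
  [forall e in S, forall f in S, (e != f) ==> (pat_of e f \in P)].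

Definition zP (n : nat) (P : seq pattern) (M : {ffun vert n -> vert n}) : nat :=
  \max_(S : {set vert n * vert n} | is_clique P M S) #|S|.

Definition P1 : seq pattern := [:: AABB; ABAB].
Definition P2 : seq pattern := [:: AABB; ABBA].

(* Probability that the uniform random matching RM_n satisfies Q. *)
Definition probRM (R : realType) (n : nat) (Q : pred {ffun vert n -> vert n}) : R :=
  (#|[set M in matchings n | Q M]|%:R / #|matchings n|%:R)%R.

(* Main.v *)
Module KK.
From Stdlib Require Import Reals Lra Lia.
Open Scope R_scope.
Lemma exp_pow_n (x : R) (n : nat) : exp x ^ n = exp (INR n * x).
Proof.
induction n as [|n IH]; simpl. rewrite Rmult_0_l, exp_0; reflexivity.
rewrite IH, <- exp_plus. f_equal. destruct n; simpl; ring.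
Qed.
Lemma kk_bound_R (k : nat) : INR (S k) ^ k <= 3 * INR k ^ k.
Proof.
destruct k as [|k]. simpl. lra.
assert (Hk : 0 < INR (S k)) by (apply lt_0_INR; lia).
rewrite (S_INR (S k)).
set (K := INR (S k)) in *.
replace (K + 1) with (K * (1 + / K)) by (field; lra).
rewrite Rpow_mult_distr.
rewrite (Rmult_comm 3).
apply Rmult_le_compat_l. apply pow_le; lra.
apply Rle_trans with (exp (/ K) ^ (S k)).
apply pow_incr. split. assert (0 < / K) by (apply Rinv_0_lt_compat; lra). lra.
apply exp_ineq1_le.
rewrite exp_pow_n. fold K. replace (K * / K) with 1 by (field; lra). apply exp_le_3.
Qed.
Lemma kk_bound (k : nat) : (Nat.pow (S k) k <= 3 * Nat.pow k k)%nat.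
Proof.
apply INR_le. rewrite mult_INR, !pow_INR. replace (INR 3) with 3 by (simpl; ring). apply kk_bound_R.
Qed.
End KK.

Require Import Defs.
From HB Require Import structures.
From mathcomp Require Import all_boot all_order all_algebra.
From mathcomp Require Import reals.
From mathcomp Require Import zify.
From mathcomp.algebra_tactics Require Import ring lra.
Import Order.TTheory GRing.Theory Num.Theory.
Set Implicit Arguments. Unset Strict Implicit. Unset Printing Implicit Defensive.
Lemma powE (a b : nat) : Nat.pow a b = a ^ b.
Proof. by elim: b => // b IH; rewrite expnS -IH. Qed.

Lemma expn_mono a b e : a <= b -> a ^ e <= b ^ e.
Proof. by move=> ab; elim: e => // e IH; rewrite !expnS leq_mul. Qed.

Lemma kk3 k : k ^ k <= 3 ^ k * k`!.
Proof.
elim: k => // k IH.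
have h : k.+1 ^ k <= 3 * k ^ k by have := KK.kk_bound k; rewrite !powE => /ssrnat.leP.
rewrite [k.+1 ^ k.+1]expnS [3 ^ k.+1]expnS factS.
have h2 : k.+1 * k.+1 ^ k <= k.+1 * (3 * k ^ k) by rewrite leq_mul2l h orbT.
have h3 : k.+1 * (3 * k ^ k) <= k.+1 * (3 * (3 ^ k * k`!)).
  by rewrite leq_mul2l leq_mul2l IH !orbT.
apply: (leq_trans h2); apply: (leq_trans h3).
nia.
Qed.

Lemma num_bound n k : k.*2 <= n.+1 -> 72 * n <= k * k ->
  'C(n.*2, k) ^ 2 * 2 ^ k <= \prod_(i < k) (n.*2 - (i.*2).+1).
Proof.
move=> hk hkk.
have hP : n ^ k <= \prod_(i < k) (n.*2 - (i.*2).+1).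
  have -> : n ^ k = \prod_(i < k) n by rewrite prod_nat_const card_ord.
  apply: leq_prod => i _; have := ltn_ord i; lia.
have hC : 'C(n.*2, k) * k`! <= 2 ^ k * n ^ k.
  rewrite bin_ffact ffact_prod -expnMn mul2n.
  have -> : n.*2 ^ k = \prod_(i < k) n.*2 by rewrite prod_nat_const card_ord.
  by apply: leq_prod => i _; apply: leq_subr.
have hK := kk3 k.
have hE : (72 * n) ^ k <= (k * k) ^ k by apply: expn_mono.
rewrite !expnMn in hE.
have e72 : 72 ^ k = 2 ^ k * 2 ^ k * 2 ^ k * (3 ^ k * 3 ^ k) by rewrite -!expnMn.
rewrite e72 in hE.
set C := 'C(n.*2, k) in hC *; set F := k`! in hC hK *; set T2 := 2 ^ k in hC hE *;
set T3 := 3 ^ k in hK hE *; set N := n ^ k in hC hP hE *; set K := k ^ k in hK hE *;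
set Pi := \prod_(i < k) _ in hP *.
have F0 : 0 < F by apply: fact_gt0.
have T30 : 0 < T3 by apply: expn_gt0.
have A0 : 0 < T3 * T3 * (F * F) by rewrite !muln_gt0 F0 T30.
rewrite -(leq_pmul2l A0).
have s1 : T3 * T3 * (F * F) * (C ^ 2 * T2) = (C * F) * (C * F) * (T2 * T3 * T3) by rewrite -mulnn; nia.
rewrite s1.
apply: (@leq_trans ((T2 * N) * (T2 * N) * (T2 * T3 * T3))).
  by rewrite leq_mul2r leq_mul ?orbT.
have s2 : T2 * N * (T2 * N) * (T2 * T3 * T3) = (T2 * T2 * T2 * (T3 * T3) * N) * N by nia.
rewrite s2.
apply: (@leq_trans (K * K * N)); first by rewrite leq_mul2r hE orbT.
apply: (@leq_trans (T3 * F * (T3 * F) * N)); first by rewrite leq_mul2r leq_mul ?orbT.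
have s3 : T3 * F * (T3 * F) * N = T3 * T3 * (F * F) * N by nia.
by rewrite s3 leq_mul2l hP orbT.
Qed.

Section Comb.
Variable n : nat.
Local Notation V := (vert n).
Local Notation FF := {ffun V -> V}.

Lemma matchingP (M : FF) : is_matching M -> (forall x, M x != x) /\ (forall x, M (M x) = x).
Proof. move/forallP=> H; split=> x; have /andP[h1 /eqP h2] := H x => //. Qed.

Lemma in_edges (M : FF) e : (e \in edges M) = (M e.1 == e.2) && (e.1 < e.2)%N.
Proof. by rewrite inE. Qed.

Lemma edge_share (M : FF) e f : is_matching M -> e \in edges M -> f \in edges M ->
  [|| e.1 == f.1, e.1 == f.2, e.2 == f.1 | e.2 == f.2] -> e = f.
Proof.
move=> /matchingP[_ inv]; rewrite !in_edges => /andP[/eqP e12 lte] /andP[/eqP f12 ltf].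
case: e e12 lte => a b /= e12 lte; case: f f12 ltf => c d /= f12 ltf.
have ea : M b = a by rewrite -e12 inv.
have fc : M d = c by rewrite -f12 inv.
case/or4P=> /eqP h.
- by rewrite -h e12 in f12; rewrite h f12.
- have bc : b = c by rewrite -e12 h fc.
  by move: lte ltf; rewrite bc h; lia.
- have ad : a = d by rewrite -ea h f12.
  by move: lte ltf; rewrite h ad; lia.
- by rewrite -h ea in fc; rewrite fc h.
Qed.


Lemma card_fiber (T U : finType) (A : {set T}) (g : T -> U) :
  #|A| = \sum_(u : U) #|[set x in A | g x == u]|.
Proof.
rewrite -sum1_card (partition_big g xpredT) //=; apply: eq_bigr => u _.
by rewrite -sum1_card; apply: eq_bigl => x; rewrite inE.
Qed.

Definition X := matchings n.
Definition cnt (S : {set V * V}) := #|[set M in X | S \subset edges M]|.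

Definition sw (b y x : V) : V := if x == b then y else if x == y then b else x.
Lemma sw_inv b y x : sw b y (sw b y x) = x.
Proof.
rewrite /sw; case: (eqVneq x b) => [->|xb]; first by rewrite eqxx; case: eqVneq.
case: (eqVneq x y) => [->|xy]; first by rewrite eqxx.
by rewrite (negbTE xb) (negbTE xy).
Qed.
Lemma sw_id b y x : x != b -> x != y -> sw b y x = x.
Proof. by rewrite /sw => /negbTE -> /negbTE ->. Qed.
Lemma sw_b b y : sw b y b = y.
Proof. by rewrite /sw eqxx. Qed.

Definition cnj (b y : V) (M : FF) : FF := [ffun x => sw b y (M (sw b y x))].
Lemma cnjK b y : cancel (cnj b y) (cnj b y).
Proof. by move=> M; apply/ffunP => x; rewrite !ffunE !sw_inv. Qed.
Lemma cnj_matching b y M : is_matching M -> is_matching (cnj b y M).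
Proof.
move=> /matchingP[nf inv]; apply/forallP => x; rewrite !ffunE !sw_inv inv sw_inv eqxx andbT.
apply/negP => /eqP h; have := nf (sw b y x); rewrite -{2}h sw_inv eqxx //.
Qed.

Definition Wset (e : V * V) (S' : {set V * V}) := e.1 |: (fst @: S' :|: snd @: S').

Lemma cnt_step M0 (S : {set V * V}) e : M0 \in X -> S \subset edges M0 -> e \in S ->
  #|~: Wset e (S :\ e)| * cnt S <= cnt (S :\ e).
Proof.
move=> M0X SE eS; set S' := S :\ e; set W := Wset e S'.
have M0m : is_matching M0 by move: M0X; rewrite inE.
have eE : e \in edges M0 by apply: (subsetP SE).
have ab : (e.1 < e.2)%N by move: eE; rewrite in_edges => /andP[].
have Hf : forall f, f \in S' -> [&& f.1 != e.2, f.2 != e.2, f.1 != e.1 & f.2 != e.1].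
  move=> f; rewrite inE => /andP[fe fS]; have fE : f \in edges M0 by apply: (subsetP SE).
  apply/and4P; split; apply/negP => /eqP h; have := edge_share M0m fE eE;
  by rewrite h eqxx ?orbT => /(_ isT) fe'; rewrite fe' inE eqxx in fe.
rewrite /cnt [X in (_ <= X)%N](card_fiber _ (fun M : FF => M e.1)).
rewrite (bigID (fun y => y \in W)) /= -sum_nat_const; apply: (leq_trans _ (leq_addl _ _)).
rewrite big_mkcond [X in (_ <= X)%N]big_mkcond /=; apply: leq_sum => y _.
rewrite inE; case: ifP => // yW.
rewrite -(card_imset _ (can_inj (cnjK e.2 y))); apply: subset_leq_card.
apply/subsetP => _ /imsetP[M MB ->]; move: MB; rewrite !inE => /andP[Mm SM].
rewrite cnj_matching //=.
have yb : e.1 != y by apply: contraNneq yW => <-; rewrite !inE eqxx.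
have ba : e.1 != e.2 by rewrite neq_ltn ab.
apply/andP; split; last first.
  have : e \in edges M by apply: (subsetP SM).
  rewrite in_edges => /andP[/eqP Ma _].
  by rewrite ffunE (sw_id ba yb) Ma sw_b.
apply/subsetP => f fS'.
have fE : f \in edges M by apply: (subsetP SM); move: fS'; rewrite inE => /andP[].
move: fE; rewrite !in_edges => /andP[/eqP Mf ->]; rewrite andbT.
have /and4P[f1 f2 _ _] := Hf f fS'.
have f1y : f.1 != y by apply: contraNneq yW => <-; rewrite !inE (imset_f fst fS') orbT.
have f2y : f.2 != y by apply: contraNneq yW => <-; rewrite !inE (imset_f snd fS') !orbT.
by rewrite ffunE (sw_id f1 f1y) Mf (sw_id f2 f2y).
Qed.

Lemma card_W e (S' : {set V * V}) : (#|Wset e S'| <= (#|S'|).*2.+1)%N.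
Proof.
rewrite /Wset cardsU1 -addn1 addnC leq_add //; last by rewrite leq_b1.
rewrite cardsU -[(#|S'|).*2]addnn; apply: leq_trans (leq_subr _ _) _.
by apply: leq_add; apply: leq_imset_card.
Qed.

Lemma cnt_bound k : forall (S : {set V * V}) M0, M0 \in X -> S \subset edges M0 ->
  #|S| = k -> (cnt S * \prod_(i < k) (n.*2 - (i.*2).+1) <= #|X|)%N.
Proof.
elim: k => [|k IH] S M0 M0X SE cS.
  rewrite big_ord0 muln1 /cnt; apply: subset_leq_card; apply/subsetP => M.
  by rewrite inE => /andP[].
have [e eS] : exists e, e \in S by apply/set0Pn; rewrite -card_gt0 cS.
have cS' : #|S :\ e| = k by move: cS; rewrite (cardsD1 e) eS add1n => -[].
have S'E : S :\ e \subset edges M0 by apply: subset_trans SE; apply: subsetDl.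
have := IH _ _ M0X S'E cS'.
apply: leq_trans.
rewrite big_ord_recr /= mulnA mulnAC leq_mul2r; apply/orP; right.
rewrite mulnC; apply: leq_trans (cnt_step M0X SE eS); rewrite leq_mul2r; apply/orP; right.
have := cardsC (Wset e (S :\ e)); rewrite card_ord => HC.
have := card_W e (S :\ e); rewrite cS' => HW.
lia.
Qed.

Lemma clique_sub P (M : FF) (S T : {set V * V}) : is_clique P M S -> T \subset S -> is_clique P M T.
Proof.
move=> /andP[SE /forall_inP H] TS; apply/andP; split; first exact: subset_trans TS SE.
apply/forall_inP => e eT; apply/forall_inP => f fT.
by have /forall_inP := H e (subsetP TS e eT); apply; apply: (subsetP TS).
Qed.

Lemma clique0 P (M : FF) : is_clique P M set0.
Proof. by rewrite /is_clique sub0set; apply/forall_inP => e; rewrite inE. Qed.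

Lemma clique_big P (M : FF) k : (k <= zP P M)%N -> exists S, is_clique P M S /\ #|S| = k.
Proof.
move=> kz.
have [S0 [S0c kS0]] : exists S0, is_clique P M S0 /\ (k <= #|S0|)%N.
  case: (boolP [exists S0, is_clique P M S0 && (k <= #|S0|)%N]) => [/existsP[S0 /andP[]]|H].
    by move=> *; eexists; split; eauto.
  exfalso.
  have H' : forall S, is_clique P M S -> (#|S| < k)%N.
    by move=> S Sc; move/existsPn: H => /(_ S); rewrite Sc /= -ltnNge.
  have k0 := H' _ (clique0 P M); rewrite cards0 in k0.
  have : (zP P M <= k.-1)%N.
    apply/bigmax_leqP => S Sc; have := H' S Sc; lia.
  lia.
have /card_geqP[s [us ss sS]] := kS0.
exists [set x in s]; split; last by rewrite cardsE (card_uniqP us).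
apply: clique_sub S0c _; apply/subsetP => x; rewrite inE; exact: sS.
Qed.

Definition valid P (S : {set V * V}) := [exists M in X, is_clique P M S].
Definition Qs P k := [set S : {set V * V} | (#|S| == k) && valid P S].

Lemma bad_bound P k :
  (#|[set M in X | (k <= zP P M)%N]| * \prod_(i < k) (n.*2 - (i.*2).+1) <= #|Qs P k| * #|X|)%N.
Proof.
set g := fun M : FF => odflt set0 [pick S in Qs P k | S \subset edges M].
rewrite (card_fiber _ g) big_distrl /= -sum1_card big_distrl /=.
rewrite big_mkcond [X in (_ <= X)%N]big_mkcond /=.
apply: leq_sum => S _.
case: ifP => SQ.
  rewrite mul1n; move: (SQ); rewrite inE => /andP[/eqP cS /exists_inP[M0 M0X /andP[SE _]]].
  apply: leq_trans (cnt_bound M0X SE cS); rewrite leq_mul2r; apply/orP; right.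
  apply: subset_leq_card; apply/subsetP => M; rewrite !inE => /andP[/andP[MX _] /eqP gM].
  rewrite MX /=; move: gM; rewrite /g; case: pickP => [S1 /andP[_ S1E] /= eS1|].
    by rewrite -eS1.
  by move=> _ /= S0; rewrite -S0 sub0set.
rewrite leqn0 muln_eq0; apply/orP; left; rewrite cards_eq0; apply/eqP/setP => M; rewrite !inE.
apply/negP => /andP[/andP[MX kz] /eqP gM].
have [S1 [S1c cS1]] := clique_big kz.
move: gM; rewrite /g; case: pickP => [S2 /andP[S2Q _] /= eS2|].
  by rewrite eS2 SQ in S2Q.
have V1 : valid P S1 by apply/exists_inP; exists M; rewrite // inE.
by move=> /(_ S1); rewrite inE cS1 eqxx V1 /=; move: S1c => /andP[-> _].
Qed.

Lemma pat_nested (e f : V * V) : (e.1 < f.1)%N -> (f.2 < e.2)%N -> (f.1 < f.2)%N -> pat_of e f = ABBA.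
Proof.
move=> h1 h2 h3; rewrite /pat_of /classify h1.
have -> : (e.2 < f.1)%N = false by apply/negbTE; rewrite -leqNgt; lia.
have -> : (e.2 < f.2)%N = false by apply/negbTE; rewrite -leqNgt; lia.
by [].
Qed.

Lemma pat_cross (e f : V * V) : (e.1 < f.1)%N -> (f.1 < e.2)%N -> (e.2 < f.2)%N -> pat_of e f = ABAB.
Proof.
move=> h1 h2 h3; rewrite /pat_of /classify h1 h3.
have -> : (e.2 < f.1)%N = false by apply/negbTE; rewrite -leqNgt; lia.
by [].
Qed.

Lemma valid_facts P (S : {set V * V}) : valid P S ->
  [/\ (forall e, e \in S -> (e.1 < e.2)%N),
      (forall e f, e \in S -> f \in S -> [|| e.1 == f.1, e.1 == f.2, e.2 == f.1 | e.2 == f.2] -> e = f)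
    & (forall e f, e \in S -> f \in S -> e != f -> pat_of e f \in P)].
Proof.
case/exists_inP => M; rewrite inE => Mm /andP[SE /forall_inP H]; split.
- by move=> e /(subsetP SE); rewrite in_edges => /andP[].
- by move=> e f /(subsetP SE) eE /(subsetP SE) fE; apply: (edge_share Mm).
- by move=> e f eS fS; have /forall_inP/(_ f fS)/implyP := H e eS.
Qed.

Lemma pairE (e f : V * V) : e.1 = f.1 -> e.2 = f.2 -> e = f.
Proof. by case: e f => [a b] [c d] /= -> ->. Qed.

Section Inj.
Variables (P : seq pattern) (S T : {set V * V}).
Hypotheses (vS : valid P S) (vT : valid P T)
  (e1 : fst @: S = fst @: T) (e2 : snd @: S = snd @: T).

Lemma agree_sub : (forall e f, e \in S -> f \in T -> e.1 = f.1 -> e.2 = f.2) -> S = T.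
Proof.
move=> H; have [_ sS _] := valid_facts vS; have [_ sT _] := valid_facts vT.
apply/setP => x; apply/idP/idP => xin.
- have : x.1 \in fst @: T by rewrite -e1; apply: imset_f.
  by case/imsetP => f fT fx; rewrite (pairE fx (H _ _ xin fT fx)).
- have : x.1 \in fst @: S by rewrite e1; apply: imset_f.
  case/imsetP => e eS ex; rewrite (pairE ex _) //.
  by rewrite (H _ _ eS xin) ?ex.
Qed.

Lemma step_common e f : e \in S -> f \in T -> e.1 = f.1 -> (e.2 < f.2)%N ->
  exists g, [/\ g \in T, g.2 = e.2 & g.1 != e.1].
Proof.
move=> eS fT ef lt.
have : e.2 \in snd @: T by rewrite -e2; apply: imset_f.
case/imsetP => g gT ge; exists g; split => //.
apply/negP => /eqP gf; have [_ sT _] := valid_facts vT.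
have gf' : g = f by apply: sT => //; rewrite gf ef eqxx.
by move: lt; rewrite ge -gf' ltnn.
Qed.
Lemma step_P1 e f : P = P1 -> e \in S -> f \in T -> e.1 = f.1 -> (e.2 < f.2)%N ->
  (forall e' f', e' \in S -> f' \in T -> e'.1 = f'.1 -> (e'.1 < e.1)%N -> e'.2 = f'.2) -> False.
Proof.
move=> PP eS fT ef lt IH.
have [g [gT ge gne]] := step_common eS fT ef lt.
have [oS sS _] := valid_facts vS; have [oT sT pT] := valid_facts vT.
case: (ltngtP g.1 e.1) => [glt|gge|geq]; last by move/ord_inj: geq => geq; rewrite geq eqxx in gne.
- have : g.1 \in fst @: S by rewrite e1; apply: imset_f.
  case/imsetP => h hS hg.
  have hg2 : h.2 = g.2 by apply: IH => //; rewrite -hg.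
  have he : h = e by apply: sS => //; rewrite hg2 ge eqxx !orbT.
  by move: glt; rewrite hg he ltnn.
- have gf : pat_of f g = ABBA.
    apply: pat_nested; [by rewrite -ef | by rewrite ge | exact: oT].
  have : f != g by apply/negP => /eqP fg; move: gge; rewrite -fg -ef ltnn.
  by move/(pT _ _ fT gT); rewrite gf PP.
Qed.

Lemma step_P2 e f : P = P2 -> e \in S -> f \in T -> e.1 = f.1 -> (e.2 < f.2)%N ->
  (forall e' f', e' \in S -> f' \in T -> e'.1 = f'.1 -> (e.1 < e'.1)%N -> e'.2 = f'.2) -> False.
Proof.
move=> PP eS fT ef lt IH.
have [g [gT ge gne]] := step_common eS fT ef lt.
have [oS sS _] := valid_facts vS; have [oT sT pT] := valid_facts vT.
case: (ltngtP g.1 e.1) => [glt|gge|geq]; last by move/ord_inj: geq => geq; rewrite geq eqxx in gne.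
- have gf : pat_of g f = ABAB.
    apply: pat_cross; [by rewrite -ef | by rewrite ge -ef; exact: oS | by rewrite ge].
  have : g != f by apply/negP => /eqP fg; move: glt; rewrite fg -ef ltnn.
  by move/(pT _ _ gT fT); rewrite gf PP.
- have : g.1 \in fst @: S by rewrite e1; apply: imset_f.
  case/imsetP => h hS hg.
  have hg2 : h.2 = g.2 by apply: IH => //; rewrite -hg.
  have he : h = e by apply: sS => //; rewrite hg2 ge eqxx !orbT.
  by move: gge; rewrite hg he ltnn.
Qed.

End Inj.

Lemma agree1 (S T : {set V * V}) : valid P1 S -> valid P1 T ->
  fst @: S = fst @: T -> snd @: S = snd @: T ->
  forall m e f, e \in S -> f \in T -> e.1 = f.1 -> (e.1 < m)%N -> e.2 = f.2.
Proof.
move=> vS vT e1 e2; elim=> // m IH e f eS fT ef lt.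
case: (ltnP e.1 m) => [lt'|ge]; first exact: IH.
have em : nat_of_ord e.1 = m by lia.
case: (ltngtP e.2 f.2) => [l|l|/ord_inj //].
- exfalso; apply: (step_P1 vS vT e1 e2 (erefl _) eS fT ef l) => e' f' e'S f'T ef' l'.
  by apply: IH => //; rewrite -em.
- exfalso; apply: (step_P1 vT vS (esym e1) (esym e2) (erefl _) fT eS (esym ef) l) => e' f' e'T f'S ef' l'.
  by apply/esym; apply: IH => //; rewrite -ef' -em ef.
Qed.

Lemma agree2 (S T : {set V * V}) : valid P2 S -> valid P2 T ->
  fst @: S = fst @: T -> snd @: S = snd @: T ->
  forall d e f, e \in S -> f \in T -> e.1 = f.1 -> (n.*2 <= e.1 + d)%N -> e.2 = f.2.
Proof.
move=> vS vT e1 e2; elim=> [|d IH] e f eS fT ef lt.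
  by move: lt; rewrite addn0 leqNgt ltn_ord.
case: (leqP n.*2 (e.1 + d)) => [lt'|ge]; first exact: IH.
case: (ltngtP e.2 f.2) => [l|l|/ord_inj //].
- exfalso; apply: (step_P2 vS vT e1 e2 (erefl _) eS fT ef l) => e' f' e'S f'T ef' l'.
  by apply: IH => //; lia.
- exfalso; apply: (step_P2 vT vS (esym e1) (esym e2) (erefl _) fT eS (esym ef) l) => e' f' e'T f'S ef' l'.
  by apply/esym; apply: IH => //; rewrite -ef'; move: l'; rewrite -ef; lia.
Qed.

Lemma injQ P k : P = P1 \/ P = P2 -> (#|Qs P k| <= 'C(n.*2, k) ^ 2)%N.
Proof.
move=> hP.
set D := [set A : {set V} | #|A| == k].
have cD : #|D| = 'C(n.*2, k) by rewrite card_draws card_ord.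
set phi := fun S : {set V * V} => (fst @: S, snd @: S).
have inj : {in Qs P k &, injective phi}.
  move=> S T; rewrite !inE => /andP[_ vS] /andP[_ vT] [h1 h2].
  case: hP => PP; subst P; apply: (agree_sub vS vT h1).
    by move=> e f eS fT ef; apply: (agree1 vS vT h1 h2 (m := n.*2)) => //.
  by move=> e f eS fT ef; apply: (agree2 vS vT h1 h2 (d := n.*2)) => //; lia.
rewrite -(card_in_imset inj) expnS expn1 -cD -cardsX; apply: subset_leq_card.
apply/subsetP => _ /imsetP[S SQ ->]; move: SQ; rewrite !inE => /andP[/eqP cS vS].
have [_ sS _] := valid_facts vS.
rewrite !card_in_imset ?cS ?eqxx //.
  by move=> e f eS fS ef; apply: sS => //; rewrite ef eqxx !orbT.
by move=> e f eS fS ef; apply: sS => //; rewrite ef eqxx.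
Qed.

Lemma bigmax_witness (T : finType) (p : pred T) (F : T -> nat) x0 :
  p x0 -> exists2 x, p x & \max_(x | p x) F x = F x.
Proof.
move=> px0; exists [arg max_(i > x0 | p i) F i]; last exact: bigmax_eq_arg.
by case: arg_maxnP.
Qed.

Lemma clique_mono P Q (M : FF) S : {subset P <= Q} -> is_clique P M S -> is_clique Q M S.
Proof.
move=> PQ /andP[SE /forall_inP H]; apply/andP; split => //.
apply/forall_inP => e eS; apply/forall_inP => f fS; apply/implyP => ef.
by apply: PQ; have /forall_inP/(_ f fS)/implyP := H e eS; apply.
Qed.

Definition contains (o g : V * V) := (o.1 <= g.1)%N && (g.2 <= o.2)%N.
Definition chain (M : FF) e S := [&& is_clique [:: ABBA] M S, e \in S & [forall f in S, contains f e]].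
Definition hh (M : FF) e := \max_(S | chain M e S) #|S|.

Lemma strict_contains (M : FF) y g : is_matching M -> y \in edges M -> g \in edges M ->
  y != g -> contains y g -> (y.1 < g.1)%N /\ (g.2 < y.2)%N.
Proof.
move=> Mm yE gE yg /andP[h1 h2]; rewrite !ltn_neqAle h1 h2 !andbT; split.
  by apply/negP => /eqP /ord_inj e; move/eqP: yg; apply; apply: (edge_share Mm yE gE); rewrite e eqxx.
by apply/negP => /eqP /ord_inj e; move/eqP: yg; apply; apply: (edge_share Mm yE gE); rewrite e eqxx !orbT.
Qed.

Lemma pat_in (M : FF) y g : is_matching M -> y \in edges M -> g \in edges M ->
  y != g -> contains y g -> pat_of y g = ABBA /\ pat_of g y = ABBA.
Proof.
move=> Mm yE gE yg c; have [l1 l2] := strict_contains Mm yE gE yg c.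
have g12 : (g.1 < g.2)%N by move: gE; rewrite in_edges => /andP[].
split; first exact: pat_nested.
rewrite /pat_of; have -> : (g.1 < y.1)%N = false by apply/negbTE; rewrite -leqNgt ltnW.
by move: (pat_nested l1 l2 g12); rewrite /pat_of l1.
Qed.

Lemma hh_lt (M : FF) o g : is_matching M -> o \in edges M -> g \in edges M -> o != g ->
  contains o g -> (hh M o < hh M g)%N.
Proof.
move=> Mm oE gE og cog.
have c0 : chain M o [set o].
  rewrite /chain set11 /=; apply/andP; split.
    apply/andP; split; first by rewrite sub1set.
    by apply/forall_inP => e; rewrite inE => /eqP->; apply/forall_inP => f; rewrite inE => /eqP->; rewrite eqxx.
  by apply/forall_inP => f; rewrite inE => /eqP->; rewrite /contains !leqnn.
have [S0 cS0 hS0] := bigmax_witness (fun S : {set V * V} => #|S|) c0.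
rewrite /hh hS0; move: cS0 => /and3P[/andP[S0E /forall_inP S0c] oS0 /forall_inP S0o].
have cont_trans : forall f, f \in S0 -> contains f g.
  move=> f /S0o /andP[a b]; move: cog => /andP[c d]; apply/andP; split.
    exact: leq_trans a c.
  exact: leq_trans d b.
have gS0 : g \notin S0.
  apply/negP => /S0o /andP[a b]; move: cog => /andP[c d].
  move/eqP: og; apply; apply: (edge_share Mm oE gE).
  have : nat_of_ord o.1 = g.1 by apply/eqP; rewrite eqn_leq c a.
  by move/ord_inj ->; rewrite eqxx.
have c1 : chain M g (g |: S0).
  rewrite /chain setU11 /=; apply/andP; split.
    apply/andP; split; first by rewrite subUset sub1set gE.
    apply/forall_inP => x; rewrite !inE => /orP[/eqP->|xS].
      apply/forall_inP => y; rewrite !inE => /orP[/eqP->|yS]; first by rewrite eqxx.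
      apply/implyP => gy.
      have yg : y != g by rewrite eq_sym.
      have yE : y \in edges M by apply: (subsetP S0E).
      by have [_ ->] := pat_in Mm yE gE yg (cont_trans y yS).
    apply/forall_inP => y; rewrite !inE => /orP[/eqP->|yS]; last first.
      by have /forall_inP/(_ y yS) := S0c x xS; rewrite inE.
    apply/implyP => xg; have xE : x \in edges M by apply: (subsetP S0E).
    by have [-> _] := pat_in Mm xE gE xg (cont_trans x xS).
  apply/forall_inP => f; rewrite !inE => /orP[/eqP->|fS]; last exact: cont_trans.
  by rewrite /contains !leqnn.
apply: leq_trans (leq_bigmax_cond _ c1); by rewrite cardsU1 gS0.
Qed.

Lemma chain1 (M : FF) e : e \in edges M -> chain M e [set e].
Proof.
move=> eE; rewrite /chain set11 /=; apply/andP; split.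
  apply/andP; split; first by rewrite sub1set.
  by apply/forall_inP => x; rewrite inE => /eqP->; apply/forall_inP => f; rewrite inE => /eqP->; rewrite eqxx.
by apply/forall_inP => f; rewrite inE => /eqP->; rewrite /contains !leqnn.
Qed.

Lemma hh_ge1 (M : FF) e : e \in edges M -> (0 < hh M e)%N.
Proof. by move=> eE; apply: leq_trans (leq_bigmax_cond _ (chain1 eE)); rewrite cards1. Qed.

Lemma hh_le (M : FF) e : (hh M e <= zP P2 M)%N.
Proof.
apply/bigmax_leqP => S /and3P[Sc _ _]; apply: leq_bigmax_cond.
by apply: clique_mono Sc => p; rewrite !inE => /eqP->; rewrite eqxx orbT.
Qed.

Lemma abba_contains (e f : V * V) : pat_of e f = ABBA -> contains e f \/ contains f e.
Proof.
rewrite /pat_of /classify /contains; case: ifP => h1; case: ifP => h2 //; case: ifP => h3 // _.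
  by left; rewrite ltnW // leqNgt h3.
by right; move/negbT: h1; rewrite -leqNgt => ->; rewrite leqNgt h3.
Qed.

Lemma edges_bound (M : FF) : is_matching M -> (#|edges M| <= zP P1 M * zP P2 M)%N.
Proof.
move=> Mm; set z2 := zP P2 M.
rewrite (card_fiber _ (fun e => (inord (hh M e) : 'I_z2.+1))) big_ord_recl /=.
have hK : forall e, nat_of_ord (inord (hh M e) : 'I_z2.+1) = hh M e.
  by move=> e; rewrite inordK // ltnS hh_le.
have -> : #|[set x in edges M | (inord (hh M x) : 'I_z2.+1) == ord0]| = 0.
  apply/eqP; rewrite cards_eq0; apply/eqP/setP => e; rewrite in_set0 inE.
  apply/negP => /andP[eE /eqP/(congr1 val)]; rewrite /= hK => h0.
  by move: (hh_ge1 eE); rewrite h0.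
have H : forall j : 'I_z2.+1, (#|[set x in edges M | (inord (hh M x) : 'I_z2.+1) == j]| <= zP P1 M)%N;
  last first.
  have -> : (zP P1 M * z2 = \sum_(i < z2) zP P1 M)%N by rewrite sum_nat_const card_ord mulnC.
  by rewrite add0n; apply: leq_sum => j _; apply: H.
move=> j; apply: leq_bigmax_cond; apply/andP; split.
  by apply/subsetP => e; rewrite inE => /andP[].
apply/forall_inP => e; rewrite inE => /andP[eE /eqP ej].
apply/forall_inP => f; rewrite inE => /andP[fE /eqP fj]; apply/implyP => ef.
have hef : hh M e = hh M f by rewrite -(hK e) -(hK f) ej fj.
case E: (pat_of e f) => //; exfalso.
case: (abba_contains E) => c.
  by move: (hh_lt Mm eE fE ef c); rewrite hef ltnn.
have fe : f != e by rewrite eq_sym.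
by move: (hh_lt Mm fE eE fe c); rewrite hef ltnn.
Qed.

Lemma card_edges (M : FF) : is_matching M -> #|edges M| = n.
Proof.
move=> Mm; have [nf inv] := matchingP Mm.
set L := [set x : V | (x < M x)%N].
have -> : edges M = (fun x => (x, M x)) @: L.
  apply/setP => -[a b]; rewrite in_edges /=; apply/idP/imsetP.
    by case/andP => /eqP <- ab; exists a; rewrite // inE.
  by case=> x; rewrite inE => xL [-> ->]; rewrite eqxx xL.
rewrite card_imset; last by move=> x y [].
have CL : ~: L = M @: L.
  apply/setP => y; rewrite !inE; apply/idP/imsetP.
    move=> yL; exists (M y); last by rewrite inv.
    rewrite inE inv ltn_neqAle leqNgt yL andbT.
    by apply/negP => /eqP /ord_inj h; move: (nf y); rewrite h eqxx.
  by case=> x; rewrite inE => xL ->; rewrite inv -leqNgt ltnW.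
have := cardsC L; rewrite CL card_imset ?card_ord; last exact: (can_inj inv).
by rewrite addnn => /(congr1 half); rewrite !doubleK.
Qed.

Definition M0 : FF := [ffun x : V => insubd x (if odd x then (x : nat).-1 else (x : nat).+1)].

Lemma M0_val (x : V) : nat_of_ord (M0 x) = if odd x then (x : nat).-1 else (x : nat).+1.
Proof.
rewrite ffunE val_insubd; case: ifP => // /negbT; rewrite -leqNgt.
have xl := ltn_ord x.
case: ifP => ox; first by move=> h; move: (leq_ltn_trans (leq_pred _) xl); rewrite ltnNge h.
move=> h; have xe : (x : nat).+1 = n.*2 by apply/eqP; rewrite eqn_leq h xl.
have : odd (x : nat).+1 = odd n.*2 by rewrite xe.
by rewrite odd_double /= ox.
Qed.

Lemma M0_matching : is_matching M0.
Proof.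
apply/forallP => x; apply/andP; split.
  apply/negP => /eqP/(congr1 (@nat_of_ord _)); rewrite M0_val; case: ifP => ox; last lia.
  by case: (nat_of_ord x) ox => //= m _; lia.
apply/eqP; apply: ord_inj; rewrite !M0_val; case: (nat_of_ord x) => [|m] /=.
  by [].
by case om: (odd m) => /=; rewrite ?negbK ?om.
Qed.

Lemma X_gt0 : (0 < #|X|)%N.
Proof. by apply/card_gt0P; exists M0; rewrite inE M0_matching. Qed.

End Comb.

Local Open Scope ring_scope.

Lemma sqrt_facts (R : realType) (n : nat) :
  let s := Num.truncn (Num.sqrt (n%:R : R)) in (s * s <= n)%N /\ (n < s.+1 * s.+1)%N.
Proof.
move=> s.
have /andP[h1 h2] := Num.Theory.truncn_itv (sqrtr_ge0 (n%:R : R)).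
have hs : (Num.sqrt (n%:R : R)) ^+ 2 = n%:R by rewrite sqr_sqrtr // ler0n.
have s0 : 0 <= (s%:R : R) by rewrite ler0n.
split.
  rewrite -(ler_nat R) natrM -hs; nra.
rewrite -(ltr_nat R) natrM -hs; nra.
Qed.

Theorem theorem1p1 :
  forall (P : seq pattern), P = P1 \/ P = P2 ->
  forall (R : realType),
  exists c C : R, (0 < c)%R /\ (c < C)%R /\
    (forall eps : R, (0 < eps)%R ->
      exists N : nat, forall n : nat, (N <= n)%N ->
        (1 - eps <= probRM R (fun M : {ffun vert n -> vert n} =>
            (c * Num.sqrt (n%:R) <= (zP P M)%:R)%R &&
            ((zP P M)%:R <= C * Num.sqrt (n%:R))%R))%R).
Proof.
move=> P hP R.
exists (1 / 17)%R, 17%R; split; first lra.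
split; first lra.
move=> eps eps0.
exists (maxn 400 (Num.truncn (2 / eps)).+1) => n nN.
have [ss1 ss2] := sqrt_facts R n.
set s := Num.truncn (Num.sqrt (n%:R : R)) in ss1 ss2.
set k := 9 * s.+1.
have n400 : (400 <= n)%N by apply: leq_trans nN; apply: leq_maxl.
have s20 : (20 <= s)%N.
  case: (leqP 20 s) => // h; have : (s.+1 * s.+1 <= 20 * 20)%N by apply: leq_mul.
  lia.
have s2 : (20 * s <= s * s)%N by apply: leq_mul.
have hk1 : (k.*2 <= n.+1)%N by rewrite /k; lia.
have hk2 : (72 * n <= k * k)%N by rewrite /k; nia.
have h2k : (n.+1 <= 2 ^ k)%N.
  have e1 := ltn_expl s.+1 (isT : (1 < 2)%N).
  have e2 : (s.+1 * s.+1 <= 2 ^ s.+1 * 2 ^ s.+1)%N by apply: leq_mul; apply: ltnW.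
  have e3 : (2 ^ s.+1 * 2 ^ s.+1 <= 2 ^ k)%N by rewrite -expnD leq_exp2l // /k; lia.
  lia.
have Bb : forall Q, Q = P1 \/ Q = P2 ->
    (#|[set M in X n | (k <= zP Q M)%N]| * n.+1 <= #|X n|)%N.
  move=> Q hQ.
  have h1 := bad_bound n Q k; have h2 := injQ n k hQ; have h3 := num_bound hk1 hk2.
  set B := #|[set M in X n | (k <= zP Q M)%N]| in h1 *.
  set C := ('C(n.*2, k) ^ 2)%N in h2 h3.
  set Pi := \prod_(i < k) _ in h1 h3.
  have C0 : (0 < C)%N by rewrite expn_gt0 bin_gt0; lia.
  have h4 : (B * 2 ^ k * C <= C * #|X n|)%N.
    apply: (@leq_trans (B * Pi)); first by rewrite -mulnA leq_mul2l [(2 ^ k * C)%N]mulnC h3 orbT.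
    apply: (leq_trans h1); by rewrite leq_mul2r h2 orbT.
  have h5 : (B * 2 ^ k <= #|X n|)%N by rewrite -(leq_pmul2r C0) [(#|X n| * _)%N]mulnC.
  by apply: leq_trans h5; rewrite leq_mul2l h2k orbT.
have hB1 := Bb P1 (or_introl erefl).
have hB2 := Bb P2 (or_intror erefl).
set B1 := #|[set M in X n | (k <= zP P1 M)%N]| in hB1.
set B2 := #|[set M in X n | (k <= zP P2 M)%N]| in hB2.
set G := [set M in X n | (zP P1 M < k)%N && (zP P2 M < k)%N].
have hG : (#|X n| <= #|G| + B1 + B2)%N.
  apply: (@leq_trans #|(G :|: [set M in X n | (k <= zP P1 M)%N]) :|: [set M in X n | (k <= zP P2 M)%N]|).
    apply: subset_leq_card; apply/subsetP => M MX; rewrite !inE.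
    have MX' : is_matching M by move: MX; rewrite inE.
    rewrite MX' /=; case: (ltnP (zP P1 M) k); case: (ltnP (zP P2 M) k) => //=; by rewrite ?orbT.
  rewrite cardsU; apply: leq_trans (leq_subr _ _) _; rewrite leq_add2r.
  by rewrite cardsU; apply: leq_trans (leq_subr _ _) _.
set Ev := fun M : {ffun vert n -> vert n} =>
            ((1 / 17 * Num.sqrt (n%:R) <= (zP P M)%:R)%R &&
            ((zP P M)%:R <= 17 * Num.sqrt (n%:R))%R).
have GE : (#|G| <= #|[set M in matchings n | Ev M]|)%N.
  apply: subset_leq_card; apply/subsetP => M; rewrite !inE => /andP[Mm /andP[z1k z2k]].
  rewrite Mm /=.
  have nz := edges_bound Mm; rewrite (card_edges Mm) in nz.
  set r := Num.sqrt (n%:R : R).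
  have rr : r * r = n%:R.
    by rewrite -expr2 sqr_sqrtr // ler0n.
  have sr : (s%:R : R) <= r.
    by have /andP[] := Num.Theory.truncn_itv (sqrtr_ge0 (n%:R : R)).
  have s20R : (20 : R) <= s%:R by rewrite ler_nat.
  have z1b : (zP P1 M <= 9 * s + 8)%N by move: z1k; rewrite /k; lia.
  have z2b : (zP P2 M <= 9 * s + 8)%N by move: z2k; rewrite /k; lia.
  have z1R : ((zP P1 M)%:R : R) <= 9 * s%:R + 8.
    by move: z1b; rewrite -(ler_nat R) natrD natrM.
  have z2R : ((zP P2 M)%:R : R) <= 9 * s%:R + 8.
    by move: z2b; rewrite -(ler_nat R) natrD natrM.
  have nzR : (n%:R : R) <= (zP P1 M)%:R * (zP P2 M)%:R.
    by move: nz; rewrite -(ler_nat R) natrM.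
  have z10 : (0 : R) <= (zP P1 M)%:R by rewrite ler0n.
  have z20 : (0 : R) <= (zP P2 M)%:R by rewrite ler0n.
  rewrite -rr in nzR.
  have z1r : ((zP P1 M)%:R : R) <= 17 * r by lra.
  have z2r : ((zP P2 M)%:R : R) <= 17 * r by lra.
  have r0 : (0 : R) < r by lra.
  have a1 : r * r <= (zP P1 M)%:R * (17 * r) by nra.
  have a2 : r * r <= (zP P2 M)%:R * (17 * r) by nra.
  rewrite /Ev -/r; case: hP => ->; apply/andP; split; nra.
have X0 := X_gt0 n.
have epsn : 2 < eps * n%:R.
  have h := Num.Theory.truncnS_gt (2 / eps).
  have hn : ((Num.truncn (2 / eps)).+1 <= n)%N by apply: leq_trans nN; apply: leq_maxr.
  move: hn; rewrite -(ler_nat R) => hn.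
  have : 2 / eps < n%:R by apply: lt_le_trans hn.
  by rewrite ltr_pdivrMr // mulrC.
rewrite /probRM ler_pdivlMr ?ltr0n //.
have GER : (#|G|%:R : R) <= #|[set M in matchings n | Ev M]|%:R by rewrite ler_nat.
have hGR : (#|X n|%:R : R) <= #|G|%:R + B1%:R + B2%:R by rewrite -!natrD ler_nat.
have hB1R : (B1%:R : R) * (n%:R + 1) <= #|X n|%:R.
  by move: hB1; rewrite -(ler_nat R) natrM -addn1 natrD.
have hB2R : (B2%:R : R) * (n%:R + 1) <= #|X n|%:R.
  by move: hB2; rewrite -(ler_nat R) natrM -addn1 natrD.
have x0 : (0 : R) <= #|X n|%:R by rewrite ler0n.
have n0 : (0 : R) <= n%:R by rewrite ler0n.
have b10 : (0 : R) <= B1%:R by rewrite ler0n.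
have b20 : (0 : R) <= B2%:R by rewrite ler0n.
have : (B1%:R + B2%:R : R) <= eps * #|X n|%:R by nra.
move: GER; rewrite /X; nra.
Qed.
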